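(* Let $V$ be a real vector space, $R:V\to\mathbb{R}\cup\{+\infty\}$ and $f:\mathbb{R}^m\to\mathbb{R}\cup\{+\infty\}$ convex, $\Phi:V\to\mathbb{R}^m$ linear, $S$ the set of minimizers of $\min_u R(u)+f(\Phi u)$, and $p\in S$ with $R(p)+f(\Phi p)<+\infty$. Let $K=\mathrm{lin}(\{u: R(u)\le R(p)\})$ and $L=\ker\Phi$. Then the minimal face $F(p,S)$ is invariant by $K\cap L$, i.e. $F(p,S)+(K\cap L)\subseteq F(p,S)$.
   Context: A face of a convex set $C$ is a convex $F\subseteq C$ such that every open segment $]x,y[=\{tx+(1-t)y:0<t<1\}$ ($x\ne y$) contained in $C$ which intersects $F$ is contained in $F$; $F(p,C)$ is the intersection of all faces of $C$ containing $p$. The lineality space of a nonempty convex set $C$ is $\mathrm{lin}(C)=\{v: C+\mathbb{R}v\subseteq C\}$. *)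

(* Defs.v *)
From HB Require Import structures.
From mathcomp Require Import all_boot all_order all_algebra.
Set Implicit Arguments. Unset Strict Implicit. Unset Printing Implicit Defensive.
Import Order.TTheory GRing.Theory Num.Theory.
Local Open Scope ring_scope.

(* Extended reals R ∪ {+oo}: [Some x] is the finite value x, [None] is +oo. *)
Definition ext_le {R : realFieldType} (a b : option R) : Prop :=
  match a, b with
  | _, None => True
  | None, Some _ => False
  | Some x, Some y => x <= y
  end.

Definition ext_add {R : realFieldType} (a b : option R) : option R :=
  match a, b with
  | Some x, Some y => Some (x + y)
  | _, _ => None
  end.

Definition convex_fun {R : realFieldType} {V : lmodType R} (g : V -> option R) : Prop :=
  forall (x y : V) (a b t : R), g x = Some a -> g y = Some b -> 0 < t -> t < 1 ->
    ext_le (g (t *: x + (1 - t) *: y)) (Some (t * a + (1 - t) * b)).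

Definition convex_set {R : realFieldType} {V : lmodType R} (C : V -> Prop) : Prop :=
  forall (x y : V) (t : R), C x -> C y -> 0 <= t -> t <= 1 -> C (t *: x + (1 - t) *: y).

Definition oseg {R : realFieldType} {V : lmodType R} (x y : V) (z : V) : Prop :=
  exists t : R, 0 < t /\ t < 1 /\ z = t *: x + (1 - t) *: y.

Definition is_face {R : realFieldType} {V : lmodType R} (C F : V -> Prop) : Prop :=
  convex_set F /\ (forall z, F z -> C z) /\
  (forall x y : V, x <> y -> (forall z, oseg x y z -> C z) ->
     (exists z, oseg x y z /\ F z) -> forall z, oseg x y z -> F z).

Definition min_face {R : realFieldType} {V : lmodType R} (p : V) (C : V -> Prop) : V -> Prop :=
  fun z => forall F, is_face C F -> F p -> F z.

Definition lineality {R : realFieldType} {V : lmodType R} (C : V -> Prop) : V -> Prop :=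
  fun v => forall c (s : R), C c -> C (c + s *: v).

(* Main.v *)
Require Import Defs.
From HB Require Import structures.
From mathcomp Require Import all_boot all_order all_algebra.
From mathcomp Require Import ring lra.
Import Order.TTheory GRing.Theory Num.Theory.
Local Open Scope ring_scope.

Lemma ext_le_refl (R : realFieldType) (a : option R) : ext_le a a.
Proof. by case: a => //= x. Qed.

Lemma ext_le_trans (R : realFieldType) (a b c : option R) :
  ext_le a b -> ext_le b c -> ext_le a c.
Proof.
case: a => [x|]; case: b => [y|]; case: c => [z|] //=.
exact: le_trans.
Qed.

Lemma ext_le_addl (R : realFieldType) (a a' b : option R) :
  ext_le a a' -> ext_le (ext_add a b) (ext_add a' b).
Proof.
case: a => [x|]; case: a' => [y|]; case: b => [z|] //=.
by move=> h; rewrite lerD2r.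
Qed.

Lemma shiftE (R : realFieldType) (V : lmodType R) (t : R) (a b d : V) :
  t *: (a + d) + (1 - t) *: (b + d) = t *: a + (1 - t) *: b + d.
Proof.
rewrite !scalerDr addrACA -scalerDl.
have -> : t + (1 - t) = 1 by ring.
by rewrite scale1r.
Qed.

Lemma comb2E (R : realFieldType) (V : lmodType R) (al be p q : R) (x y : V) :
  al *: (p *: x + (1 - p) *: y) + be *: (q *: x + (1 - q) *: y) =
  (al * p + be * q) *: x + (al * (1 - p) + be * (1 - q)) *: y.
Proof.
by rewrite !scalerDr !scalerA addrACA -!scalerDl.
Qed.

Lemma lineE (R : realFieldType) (V : lmodType R) (t a b : R) (p v : V) :
  t *: (p + a *: v) + (1 - t) *: (p + b *: v) = p + (t * a + (1 - t) * b) *: v.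
Proof.
rewrite !scalerDr !scalerA addrACA -!scalerDl.
have -> : t + (1 - t) = 1 by ring.
by rewrite scale1r.
Qed.

Lemma convC (R : realFieldType) (V : lmodType R) (S : V -> Prop) (a w v : V)
  (l s : R) :
  convex_set S -> S a -> (forall s', S (w + s' *: v)) -> 0 < l -> l < 1 ->
  S (l *: a + (1 - l) *: w + s *: v).
Proof.
move=> cS Sa Sw l0 l1.
have -> : l *: a + (1 - l) *: w + s *: v =
          l *: a + (1 - l) *: (w + (s / (1 - l)) *: v).
  rewrite scalerDr scalerA -addrA; congr (_ + (_ + _)).
  congr (_ *: _); field; lra.
apply: cS => //; lra.
Qed.

Lemma segC (R : realFieldType) (V : lmodType R) (S : V -> Prop) (x y w u v : V)
  (s : R) :
  convex_set S -> (forall z, oseg x y z -> S z) -> oseg x y w ->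
  (forall s', S (w + s' *: v)) -> oseg x y u -> S (u + s *: v).
Proof.
move=> cS hseg [t0 [t00 [t01 ->]]] Sw [t [tt0 [tt1 ->]]].
set mu := t * (1 - t) / 2.
have mu0 : 0 < mu by rewrite /mu; apply: divr_gt0 => //; nra.
have mut : mu <= t / 2 by rewrite /mu; nra.
have mut' : mu <= (1 - t) / 2 by rewrite /mu; nra.
set t1 := t + mu * (t - t0).
have Sa : S (t1 *: x + (1 - t1) *: y).
  apply: hseg; exists t1; split; [|split] => //; rewrite /t1; nra.
set l := 1 / (1 + mu).
have l0 : 0 < l by rewrite /l; apply: divr_gt0 => //; lra.
have l1 : l < 1 by rewrite /l ltr_pdivrMr; lra.
have -> : t *: x + (1 - t) *: y =
  l *: (t1 *: x + (1 - t1) *: y) + (1 - l) *: (t0 *: x + (1 - t0) *: y).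
  rewrite comb2E; congr (_ *: _ + _ *: _); rewrite /l /t1; field; lra.
exact: convC.
Qed.

Theorem mainTheorem6 (R : realFieldType) (V : lmodType R) (m : nat)
  (Rf : V -> option R) (f : 'rV[R]_m -> option R) (Phi : {linear V -> 'rV[R]_m})
  (p : V) :
  convex_fun Rf -> convex_fun f ->
  (* p is a minimizer of u |-> R(u) + f(Phi u) *)
  (forall w : V, ext_le (ext_add (Rf p) (f (Phi p))) (ext_add (Rf w) (f (Phi w)))) ->
  ext_add (Rf p) (f (Phi p)) <> None ->
  let S := fun u : V => forall w : V,
             ext_le (ext_add (Rf u) (f (Phi u))) (ext_add (Rf w) (f (Phi w))) in
  let K := lineality (fun u : V => ext_le (Rf u) (Rf p)) in
  let L := fun v : V => Phi v = 0 in
  forall z v : V, min_face p S z -> K v -> L v -> min_face p S (z + v).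
Proof.
move=> hR hf hmin hfin S K L z v hz hK hL.
have SE : forall u, ext_le (ext_add (Rf u) (f (Phi u))) (ext_add (Rf p) (f (Phi p)))
   -> S u.
  by move=> u hu w; apply: ext_le_trans hu (hmin w).
have Sp : forall u, S u ->
   ext_le (ext_add (Rf u) (f (Phi u))) (ext_add (Rf p) (f (Phi p))) by move=> u; apply.
case Ep : (ext_add (Rf p) (f (Phi p))) hfin => [c|] // _.
rewrite Ep in SE Sp.
have cS : convex_set S.
  move=> u w t Su Sw t0 t1.
  have [->|tn0] := eqVneq t 0; first by rewrite scale0r add0r subr0 scale1r.
  have [->|tn1] := eqVneq t 1; first by rewrite scale1r subrr scale0r addr0.
  have tp : 0 < t by rewrite lt_neqAle eq_sym tn0.
  have tq : t < 1 by rewrite lt_neqAle tn1.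
  apply: SE; move: (Sp u Su) (Sp w Sw).
  case Ru : (Rf u) => [a1|] //; case Fu : (f (Phi u)) => [b1|] //=.
  case Rw : (Rf w) => [a2|] //; case Fw : (f (Phi w)) => [b2|] //= h1 h2.
  move: (hR u w a1 a2 t Ru Rw tp tq).
  have := hf (Phi u) (Phi w) b1 b2 t Fu Fw tp tq.
  rewrite linearD !linearZ /=.
  case: (Rf _) => [r1|] //; case: (f _) => [r2|] //= H2 H1.
  nra.
have Sline : forall s, S (p + s *: v).
  move=> s; apply: SE.
  have -> : Phi (p + s *: v) = Phi p by rewrite linearD linearZ /= hL scaler0 addr0.
  rewrite -Ep; apply: ext_le_addl.
  by apply: (hK p s); apply: ext_le_refl.
move=> F [cF [FS Fface]] Fp.
set H := fun u => forall s, F (u + s *: v).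
suff : H z by move/(_ 1); rewrite scale1r.
apply: hz; last first.
  move=> s.
  have [->|vn0] := eqVneq v 0; first by rewrite scaler0 addr0.
  have [->|sn0] := eqVneq s 0; first by rewrite scale0r addr0.
  have seg : forall w, oseg (p + (2 * s) *: v) (p + (- (2 * s)) *: v) w ->
     exists sg, w = p + sg *: v.
    move=> w [t [_ [_ ->]]]; rewrite lineE; by eexists.
  have := Fface (p + (2 * s) *: v) (p + (- (2 * s)) *: v).
  apply.
  - move/addrI/eqP; rewrite -subr_eq0 -scalerBl scaler_eq0 (negbTE vn0) orbF.
    apply/negP; rewrite opprK -mulr2n mulrn_eq0 /= mulf_eq0 (negbTE sn0) orbF.
    by rewrite pnatr_eq0.
  - by move=> w /seg [sg ->].
  - exists p; split => //; exists (1/2); split; [lra|split; [lra|]].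
    rewrite lineE; have -> : (1 / 2 * (2 * s) + (1 - 1 / 2) * - (2 * s)) = 0 by field.
    by rewrite scale0r addr0.
  - exists (3/4); split; [lra|split; [lra|]].
    by rewrite lineE; congr (_ + _ *: _); field.
split; [|split].
- move=> u w t Hu Hw t0 t1 s.
  rewrite -shiftE; exact: cF.
- by move=> u /(_ 0); rewrite scale0r addr0; apply: FS.
- move=> x y xy hseg [w [ow Hw]] u ou s.
  apply: (Fface (x + s *: v) (y + s *: v)).
  + by move/addIr.
  + move=> z' [t [t0 [t1 ->]]]; rewrite shiftE.
    refine (@segC R V S x y w (t *: x + (1 - t) *: y) v s cS hseg ow _ _).
    * move=> s'; exact: (FS _ (Hw s')).
    * by exists t.
  + exists (w + s *: v); split => //.
    by case: ow => t [t0 [t1 ->]]; exists t; rewrite shiftE.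
  + by case: ou => t [t0 [t1 ->]]; exists t; rewrite shiftE.
Qed.
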